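(* Let $R$ be a ring. (1) For each $S\in\mathrm{Den}_l(R)$, the poset $(\{S'\in\mathrm{Den}_l(R)\mid S\subseteq S'\},\subseteq)$ has a maximal element. (2) The set $\mathrm{maxDen}_l(R)$ of maximal elements of the poset $(\mathrm{Den}_l(R),\subseteq)$ is non-empty.
   Context: Rings are associative with $1$. A multiplicatively closed subset $S$ ($1\in S$, $0\notin S$, closed under products) is a left Ore set if $Sr\cap Rs\ne\emptyset$ for all $r\in R,s\in S$; it is a left denominator set if moreover $rs=0$ ($r\in R$, $s\in S$) implies $tr=0$ for some $t\in S$. $\mathrm{Den}_l(R)$ is the set of all left denominator sets of $R$. *)

(* Defs.v *)
From mathcomp Require Import all_boot all_algebra.
Set Implicit Arguments. Unset Strict Implicit. Unset Printing Implicit Defensive.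
Import GRing.Theory.
Local Open Scope ring_scope.

Definition subset_of (R : Type) (S T : R -> Prop) : Prop := forall x, S x -> T x.

Definition mult_closed (R : nzRingType) (S : R -> Prop) : Prop :=
  S 1 /\ ~ S 0 /\ (forall a b, S a -> S b -> S (a * b)).

Definition left_ore (R : nzRingType) (S : R -> Prop) : Prop :=
  mult_closed S /\
  (forall (r s : R), S s -> exists s' r', S s' /\ s' * r = r' * s).

Definition left_denominator (R : nzRingType) (S : R -> Prop) : Prop :=
  left_ore S /\
  (forall (r s : R), S s -> r * s = 0 -> exists t, S t /\ t * r = 0).

Definition max_left_denominator (R : nzRingType) (T : R -> Prop) : Prop :=
  left_denominator T /\
  (forall T', left_denominator T' -> subset_of T T' -> subset_of T' T).

(* Main.v *)
Require Import Defs.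
From mathcomp Require Import all_boot all_algebra.
From mathcomp Require Import boolp classical_sets.

Import GRing.Theory.
Local Open Scope ring_scope.
Section Aux.
Variable R : nzRingType.

Definition PP (S : R -> Prop) (X : R -> Prop) := left_denominator X /\ subset_of S X.

Lemma chain_union (S : R -> Prop) (A : {X : R -> Prop | PP S X} -> Prop) X0 :
  A X0 ->
  (forall X Y, A X -> A Y -> subset_of (sval X) (sval Y) \/ subset_of (sval Y) (sval X)) ->
  PP S (fun x => exists X, A X /\ sval X x).
Proof.
move=> AX0 tot.
have ldX : forall X : {X : R -> Prop | PP S X}, left_denominator (sval X).
  move=> Z; exact: (proj1 (proj2_sig Z)).
split; last first.
  by move=> x Sx; exists X0; split=> //; case: (proj2_sig X0) => _ H; exact: H.
split; [split; [split|]|].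
- by exists X0; split=> //; case: (ldX X0) => [[[]]].
- split.
  + move=> [X [_ HX]]; by case: (ldX X) => [[[_ [H _]] _] _].
  + move=> a b [X [AX Xa]] [Y [AY Yb]].
    case: (tot X Y AX AY) => sub.
    * exists Y; split=> //; case: (ldX Y) => [[[_ [_ H]] _] _]; apply: H => //; exact: sub.
    * exists X; split=> //; case: (ldX X) => [[[_ [_ H]] _] _]; apply: H => //; exact: sub.
- move=> r s [X [AX Xs]].
  case: (ldX X) => [[_ H] _]; have [s' [r' [Xs' e]]] := H r s Xs.
  by exists s', r'; split=> //; exists X.
- move=> r s [X [AX Xs]] e.
  case: (ldX X) => [_ H]; have [t [Xt e']] := H r s Xs e.
  by exists t; split=> //; exists X.
Qed.

Lemma maxP (S : R -> Prop) : left_denominator S ->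
  exists T, PP S T /\ (forall T', PP S T' -> subset_of T T' -> subset_of T' T).
Proof.
move=> ldS.
pose Rl := fun X Y : {X : R -> Prop | PP S X} => `[< subset_of (sval X) (sval Y) >].
have := @Zorn _ Rl.
case.
- by move=> t; apply/asboolP.
- move=> r s t /asboolP H1 /asboolP H2; apply/asboolP => x /H1; exact: H2.
- move=> [X pX] [Y pY] /asboolP H1 /asboolP H2; apply: eq_exist => /=.
  apply: funext => x; apply: propext; split; [exact: H1|exact: H2].
- move=> A totA.
  have [[X0 AX0]|nA] := pselect (exists X0, A X0).
    have tot' : forall X Y, A X -> A Y -> subset_of (sval X) (sval Y) \/ subset_of (sval Y) (sval X).
      by move=> X Y AX AY; case: (totA X Y AX AY) => /asboolP H; [left|right].
    exists (exist _ _ (@chain_union S A X0 AX0 tot')) => s As; apply/asboolP => x sx /=.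
    by exists s.
  have pS : PP S S by split.
  exists (exist _ S pS) => s As; exfalso; apply: nA; by exists s.
- move=> [T pT] Hmax; exists T; split=> // T' pT' sub.
  have := Hmax (exist _ T' pT'); rewrite /Rl /=.
  move=> H; have E := H (introT (asboolP _) sub).
  by case: E => ->.
Qed.

Lemma ld1 : left_denominator (fun x : R => x = 1).
Proof.
split; [split; [split; [by []|split]|]|].
- by move=> /esym /eqP; rewrite oner_eq0.
- by move=> a b -> ->; rewrite mulr1.
- move=> r s ->; exists 1, r; split=> //; by rewrite mul1r mulr1.
- move=> r s -> e; exists 1; split=> //; by rewrite mul1r -[r]mulr1.
Qed.
End Aux.

Theorem lemma3p7 (R : nzRingType) :
  (forall S : R -> Prop, left_denominator S ->
     exists T : R -> Prop,
       (left_denominator T /\ subset_of S T) /\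
       (forall T' : R -> Prop, left_denominator T' -> subset_of S T' ->
          subset_of T T' -> subset_of T' T)) /\
  (exists T : R -> Prop, max_left_denominator T).
Proof.
split.
  move=> S ldS; have [T [pT H]] := @maxP R S ldS; exists T; split=> // T' l s.
  by apply: H.
have [T [[lT sT] H]] := @maxP R _ (@ld1 R); exists T; split=> // T' l sub.
apply: H => //; split=> // x ->; exact: (sub _ (sT _ erefl)).
Qed.
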